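(* Let $G=(V,E)$ be a graph on $V=\{1,\dots,n\}$ and $(\tilde g,\theta)$ a nominal configuration such that each of the sets $\{\tilde p^x_{i,\theta}\}_{i\in V}$, $\{\tilde p^y_{i,\theta}\}_{i\in V}$, $\{\tilde\phi_i\}_{i\in V}$ affinely spans $\mathbb R$. Then $\mathrm{null}(M(G,\tilde g,\theta))=\Pi(\tilde g,\theta)$ if and only if $\mathrm{rank}(M(G,\tilde g,\theta))=3n-6$.
   Context: $E\subseteq\{(i,k):i\ne k\}$, $(i,k)\in E$ means agent $k$ measures agent $i$. $R(\theta)$ is the $2\times2$ rotation by $\theta$, $\Theta=\mathrm{diag}(R(\theta),1)$. $\tilde g_i=[\tilde p_i^\top,\tilde\phi_i]^\top\in\mathbb R^3$, $\Theta^\top\tilde g_i=[\tilde p^x_{i,\theta},\tilde p^y_{i,\theta},\tilde\phi_i]^\top$; $\tilde p^x_{uv,\theta}=\tilde p^x_{u,\theta}-\tilde p^x_{v,\theta}$, similarly $y$, $\tilde\phi_{uv}=\tilde\phi_u-\tilde\phi_v$; $w_{uv}=\mathrm{diag}(\tilde p^x_{uv,\theta},\tilde p^y_{uv,\theta},\tilde\phi_{uv})$, $W_{uv}=w_{uv}\Theta^\top$. $C=\{(i,j,k)\in V^3:(i,k),(j,k)\in E,\ i<j\}$. $M(G,\tilde g,\theta)\in\mathbb R^{3n\times3n}$: the $k$-th $3$-block of $Mg$ is $\sum_{(i,j,k)\in C}(W_{jk}(g_i-g_k)+W_{ki}(g_j-g_k))$. $\Pi(\tilde g,\theta)=\{g\in\mathbb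 R^{3n}:g_i=\tau+\Theta\,\mathrm{diag}(s)\Theta^\top\tilde g_i\ \forall i,\ s,\tau\in\mathbb R^3\}$. A set of reals affinely spans $\mathbb R$ iff it contains two distinct elements. *)

(* Defs.v *)
From HB Require Import structures.
From mathcomp Require Import all_boot all_order all_algebra.
From mathcomp Require Import reals trigo.
Set Implicit Arguments. Unset Strict Implicit. Unset Printing Implicit Defensive.
Import Order.TTheory GRing.Theory Num.Theory.
Local Open Scope ring_scope.

(* Agents are indexed by 'I_n (0-based version of {1,..,n}).
   A vector g in R^{3n} is a column vector 'cV_(n*3); its i-th 3-block
   (agent i) occupies entries 3*i, 3*i+1, 3*i+2. *)

Lemma idx_lt (n : nat) (i : 'I_n) (a : 'I_3) : (i * 3 + a < n * 3)%N.
Proof.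
have Hi := ltn_ord i; have Ha := ltn_ord a.
rewrite (leq_trans (n := i * 3 + 3)) ?ltn_add2l //.
by rewrite -mulSnr leq_mul2r ltn_ord orbT.
Qed.

Definition idx (n : nat) (i : 'I_n) (a : 'I_3) : 'I_(n * 3) := Ordinal (idx_lt i a).

Lemma blk_lt (n : nat) (r : 'I_(n * 3)) : (r %/ 3 < n)%N.
Proof. by rewrite ltn_divLR // ltn_ord. Qed.

Lemma cmp_lt (n : nat) (r : 'I_(n * 3)) : (r %% 3 < 3)%N.
Proof. by rewrite ltn_pmod. Qed.

Definition blk (n : nat) (r : 'I_(n * 3)) : 'I_n := Ordinal (blk_lt r).
Definition cmp (n : nat) (r : 'I_(n * 3)) : 'I_3 := Ordinal (cmp_lt r).

Definition block (R : ringType) (n : nat) (g : 'cV[R]_(n * 3)) (i : 'I_n) : 'cV[R]_3 :=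
  \col_(a < 3) g (idx i a) 0.

Definition Theta (R : realType) (th : R) : 'M[R]_3 :=
  \matrix_(a < 3, b < 3)
    match nat_of_ord a, nat_of_ord b with
    | 0, 0 => cos th | 0, 1 => - sin th
    | 1, 0 => sin th | 1, 1 => cos th
    | 2, 2 => 1 | _, _ => 0
    end.

Section Config.
Variables (R : realType) (n : nat) (gt : 'I_n -> 'cV[R]_3) (th : R).

(* Theta^T gt_i = [p^x_{i,theta}, p^y_{i,theta}, phi_i]^T *)
Definition gtheta (i : 'I_n) : 'cV[R]_3 := (Theta th)^T *m gt i.

Definition w_mx (u v : 'I_n) : 'M[R]_3 := diag_mx (gtheta u - gtheta v)^T.
Definition W_mx (u v : 'I_n) : 'M[R]_3 := w_mx u v *m (Theta th)^T.

Variable E : rel 'I_n.  (* E k' k : (k',k) in E, i.e. agent k measures agent k' *)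

(* (k,l) 3x3 block of M: coefficient of g_l in the k-th block of M g,
   where the k-th block of M g is
   sum_{(i,j,k) in C} (W_jk (g_i - g_k) + W_ki (g_j - g_k)),
   C = {(i,j,k) : (i,k),(j,k) in E, i < j}. *)
Definition Mblock (k l : 'I_n) : 'M[R]_3 :=
  \sum_(i < n) \sum_(j < n | (i < j)%N && E i k && E j k)
     ((l == i)%:R *: W_mx j k + (l == j)%:R *: W_mx k i
      - (l == k)%:R *: (W_mx j k + W_mx k i)).

Definition Mmat : 'M[R]_(n * 3) :=
  \matrix_(r, c) Mblock (blk r) (blk c) (cmp r) (cmp c).

Definition Pi_set (g : 'cV[R]_(n * 3)) : Prop :=
  exists s tau : 'cV[R]_3, forall i : 'I_n,
    block g i = tau + Theta th *m diag_mx s^T *m (Theta th)^T *m gt i.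

End Config.

(* a set {x_i}_{i in V} of reals affinely spans R iff it has two distinct elements *)
Definition affinely_spans_R (R : realType) (n : nat) (x : 'I_n -> R) : Prop :=
  exists i j : 'I_n, x i != x j.

(* Main.v *)
Require Import Defs.
From HB Require Import structures.
From mathcomp Require Import all_boot all_order all_algebra.
From mathcomp Require Import reals trigo.
From mathcomp Require Import zify ring lra.
Set Implicit Arguments. Unset Strict Implicit. Unset Printing Implicit Defensive.
Import Order.TTheory GRing.Theory Num.Theory.
Local Open Scope ring_scope.

Lemma ThetaTK (R : realType) (th : R) : (Theta th)^T *m Theta th = 1%:M.
Proof.
have h := cos2Dsin2 th; rewrite !expr2 in h.
apply/matrixP => a b; rewrite !mxE !big_ord_recr big_ord0 /= !mxE.
case: a => [[|[|[|a]]] Ha] //; case: b => [[|[|[|b]]] Hb] //=;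
  rewrite ?mulr0 ?mul0r ?addr0 ?add0r ?mulr1 //; try lra.
Qed.

Lemma ThetaKT (R : realType) (th : R) : Theta th *m (Theta th)^T = 1%:M.
Proof. exact: mulmx1C (ThetaTK th). Qed.

Section Idx.
Variable n : nat.
Lemma blk_idx (i : 'I_n) (a : 'I_3) : blk (idx i a) = i.
Proof. apply: val_inj => /=; rewrite divnMDl // divn_small ?addn0 //. Qed.
Lemma cmp_idx (i : 'I_n) (a : 'I_3) : cmp (idx i a) = a.
Proof. apply: val_inj => /=; rewrite modnMDl modn_small //. Qed.
Lemma idx_blk (c : 'I_(n * 3)) : idx (blk c) (cmp c) = c.
Proof. apply: val_inj => /=; by rewrite -divn_eq. Qed.

Lemma sum_idx (R : ringType) (F : 'I_(n * 3) -> R) :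
  \sum_c F c = \sum_(l < n) \sum_(b < 3) F (idx l b).
Proof.
rewrite pair_big /=.
rewrite (reindex (fun p : 'I_n * 'I_3 => idx p.1 p.2)) //=.
exists (fun c => (blk c, cmp c)) => [[i a] _|c _] /=.
  by rewrite blk_idx cmp_idx.
by rewrite idx_blk.
Qed.
End Idx.

Section Main.
Variables (R : realType) (n : nat) (E : rel 'I_n) (gt : 'I_n -> 'cV[R]_3) (th : R).

Lemma block_mul (g : 'cV[R]_(n * 3)) k :
  block (Mmat gt th E *m g) k = \sum_l Mblock gt th E k l *m block g l.
Proof.
apply/matrixP => a z; rewrite (ord1 z) !mxE summxE sum_idx.
apply: eq_bigr => l _; rewrite !mxE; apply: eq_bigr => b _.
by rewrite !mxE blk_idx cmp_idx blk_idx cmp_idx.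
Qed.

Lemma sum_pick (V : lmodType R) (i : 'I_n) (X : 'I_n -> V) :
  \sum_l (l == i)%:R *: X l = X i.
Proof.
rewrite (bigD1 i) //= eqxx scale1r big1 ?addr0 // => l /negbTE ->.
by rewrite scale0r.
Qed.

Lemma Msum (g : 'I_n -> 'cV[R]_3) k :
  \sum_l Mblock gt th E k l *m g l =
  \sum_(i < n) \sum_(j < n | (i < j)%N && E i k && E j k)
     (W_mx gt th j k *m (g i - g k) + W_mx gt th k i *m (g j - g k)).
Proof.
under eq_bigr => l _ do rewrite /Mblock mulmx_suml; rewrite exchange_big /=.
apply: eq_bigr => i _.
under eq_bigr => l _ do rewrite mulmx_suml; rewrite exchange_big /=.
apply: eq_bigr => j _.
under eq_bigr => l _ do rewrite mulmxBl mulmxDl -!scalemxAl.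
rewrite sumrB big_split /=.
rewrite (@sum_pick _ i (fun l => W_mx gt th j k *m g l)).
rewrite (@sum_pick _ j (fun l => W_mx gt th k i *m g l)).
rewrite (@sum_pick _ k (fun l => (W_mx gt th j k + W_mx gt th k i) *m g l)).
rewrite !mulmxBr mulmxDl.
by rewrite opprD addrACA.
Qed.
End Main.

Section Main2.
Variables (R : realType) (n : nat) (E : rel 'I_n) (gt : 'I_n -> 'cV[R]_3) (th : R).
Let T := Theta th.

Lemma Wterm (s : 'cV[R]_3) u v i k :
  W_mx gt th u v *m (T *m diag_mx s^T *m T^T *m (gt i - gt k)) =
  w_mx gt th u v *m (diag_mx s^T *m (gtheta gt th i - gtheta gt th k)).
Proof.
rewrite /W_mx /gtheta -mulmxBr -!mulmxA; congr (_ *m _).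
by rewrite !mulmxA ThetaTK mul1mx.
Qed.

Lemma term0 (s tau : 'cV[R]_3) i j k :
  let g l := tau + T *m diag_mx s^T *m T^T *m gt l in
  W_mx gt th j k *m (g i - g k) + W_mx gt th k i *m (g j - g k) = 0.
Proof.
move=> g; have hd (a b : 'cV[R]_3) : (tau + a) - (tau + b) = a - b by rewrite opprD addrACA subrr add0r.
rewrite /g !hd -!mulmxBr !Wterm.
rewrite /w_mx !mul_diag_mx; apply/matrixP => a z; rewrite (ord1 z) !mxE; ring.
Qed.
End Main2.

Section Main3.
Variables (R : realType) (n : nat) (E : rel 'I_n) (gt : 'I_n -> 'cV[R]_3) (th : R).

Lemma Pi_null g : Pi_set gt th g -> Mmat gt th E *m g = 0.
Proof.
move=> [s [tau Hg]].
have H k : block (Mmat gt th E *m g) k = 0.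
  rewrite block_mul Msum big1 // => i _; rewrite big1 // => j _.
  by rewrite !Hg term0.
apply/matrixP => c z; rewrite (ord1 z).
move/matrixP/(_ (cmp c) 0): (H (blk c)); rewrite !mxE idx_blk //.
Qed.

Definition Ps : 'M[R]_(3, n * 3) :=
  \matrix_(b, c) (Theta th (cmp c) b * gtheta gt th (blk c) b 0).
Definition Pt : 'M[R]_(3, n * 3) := \matrix_(b, c) (b == cmp c)%:R.
Definition P : 'M[R]_(3 + 3, n * 3) := col_mx Ps Pt.

Lemma Pmul (s tau : 'cV[R]_3) i a :
  (row_mx s^T tau^T *m P) 0 (idx i a) =
  (tau + Theta th *m diag_mx s^T *m (Theta th)^T *m gt i) a 0.
Proof.
rewrite /P mul_row_col -!mulmxA.
change ((Theta th)^T *m gt i) with (gtheta gt th i).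
set G := gtheta gt th i.
rewrite mul_diag_mx [in RHS]mxE.
rewrite [LHS]mxE addrC; congr (_ + _).
  rewrite mxE (bigD1 a) //= big1 /Pt ?mxE ?cmp_idx ?eqxx ?mulr1 ?addr0 //.
  by move=> b /negbTE hb; rewrite !mxE cmp_idx hb mulr0.
rewrite !mxE; apply: eq_bigr => b _.
rewrite /Ps !mxE blk_idx cmp_idx -/G; ring.
Qed.
End Main3.


Section Main4.
Variables (R : realType) (n : nat) (gt : 'I_n -> 'cV[R]_3) (th : R).

Lemma Pi_sub g : Pi_set gt th g -> (g^T <= P gt th)%MS.
Proof.
  move=> [s [tau Hg]]; apply/submxP; exists (row_mx s^T tau^T).
  apply/matrixP => z c; rewrite (ord1 z).
  rewrite -(idx_blk c).
  rewrite Pmul.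
  rewrite -Hg.
  by rewrite /block !mxE.
Qed.



Lemma sub_Pi g : (g^T <= P gt th)%MS -> Pi_set gt th g.
Proof.
case/submxP => D HD; exists (lsubmx D)^T, (rsubmx D)^T => i.
apply/matrixP => a z; rewrite (ord1 z).
rewrite -Pmul !trmxK hsubmxK -HD.
by rewrite /block !mxE.
Qed.

Lemma P_free (Hspan : forall a : 'I_3, affinely_spans_R (fun i => gtheta gt th i a 0)) :
  row_free (P gt th).
Proof.
rewrite -kermx_eq0 -submx0; apply/row_subP => q.
have /sub_kermxP : (row q (kermx (P gt th)) <= kermx (P gt th))%MS by exact: row_sub.
move: (row q _) => v Hv; rewrite submx0; apply/eqP.
have [s [tau Ev]] : exists s tau : 'cV[R]_3, v = row_mx s^T tau^T.
  by exists (lsubmx v)^T, (rsubmx v)^T; rewrite !trmxK hsubmxK.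
rewrite Ev in Hv *.
have H0 i : tau + Theta th *m diag_mx s^T *m (Theta th)^T *m gt i = 0.
  apply/matrixP => a z; rewrite (ord1 z) -Pmul Hv !mxE //.
have H1 i : (Theta th)^T *m tau + diag_mx s^T *m gtheta gt th i = 0.
  have -> : diag_mx s^T *m gtheta gt th i =
     (Theta th)^T *m (Theta th *m diag_mx s^T *m (Theta th)^T *m gt i).
    by rewrite /gtheta !mulmxA ThetaTK mul1mx.
  by rewrite -mulmxDr H0 mulmx0.
have Hs : s = 0.
  apply/matrixP => a z; rewrite (ord1 z) mxE.
  have [i [j Hij]] := Hspan a.
  have H2 k : ((Theta th)^T *m tau) a 0 + s a 0 * gtheta gt th k a 0 = 0.
    move: (H1 k); move: (gtheta gt th k) ((Theta th)^T *m tau) => G u.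
    by rewrite mul_diag_mx => /matrixP/(_ a 0); rewrite !mxE.
  have Hi := H2 i; have Hj := H2 j.
  have : s a 0 * (gtheta gt th i a 0 - gtheta gt th j a 0) = 0.
    rewrite mulrBr; apply/eqP; rewrite subr_eq0; apply/eqP.
    by apply: (@addrI _ (((Theta th)^T *m tau) a 0)); rewrite Hi Hj.
  by move/eqP; rewrite mulf_eq0 subr_eq0 (negbTE Hij) orbF => /eqP.
have Ht : tau = 0.
  have [i _] := Hspan ord0.
  have := H1 i; have D0 : diag_mx (0 : 'rV[R]_3) = 0 by apply/matrixP => ? ?; rewrite !mxE mul0rn.
  rewrite Hs trmx0 D0 mul0mx addr0 => /(congr1 (mulmx (Theta th))).
  by rewrite mulmxA ThetaKT mul1mx mulmx0.
by rewrite Hs Ht !trmx0 row_mx0.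
Qed.
End Main4.

Unset Implicit Arguments.
Set Strict Implicit.

Theorem lemma7 (R : realType) (n : nat) (E : rel 'I_n)
  (HE : forall i k : 'I_n, E i k -> i != k)
  (gt : 'I_n -> 'cV[R]_3) (th : R)
  (Hspan : forall a : 'I_3, affinely_spans_R (fun i => gtheta gt th i a 0)) :
  (forall g : 'cV[R]_(n * 3), Mmat gt th E *m g = 0 <-> Pi_set gt th g)
  <-> \rank (Mmat gt th E) = (n * 3 - 6)%N.
Proof.
set M := Mmat gt th E.
set K := kermx M^T.
have nullK g : M *m g = 0 <-> (g^T <= K)%MS.
  split => H; first by apply/sub_kermxP; rewrite -trmx_mul H trmx0.
  by move/sub_kermxP: H; rewrite -trmx_mul => /(congr1 trmx); rewrite trmxK trmx0.
have PK : (P gt th <= K)%MS.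
  apply/row_subP => q; rewrite -[row q _]trmxK; apply/nullK/Pi_null/sub_Pi.
  by rewrite trmxK row_sub.
have rP : \rank (P gt th) = 6%N by apply/eqP; exact: P_free.
have rK : \rank K = (n * 3 - \rank M)%N by rewrite mxrank_ker mxrank_tr.
have r6 : (6 <= n * 3)%N by rewrite -rP rank_leq_col.
have rM := rank_leq_col M.
split.
  move=> H.
  have KP : (K <= P gt th)%MS.
    apply/row_subP => q; rewrite -[row q _]trmxK; apply/Pi_sub/H/nullK.
    by rewrite trmxK row_sub.
  have : \rank K = \rank (P gt th) by apply/eqP; rewrite eqn_leq !mxrankS.
  rewrite rK rP; lia.
move=> Hr.
have KP : (K <= P gt th)%MS.
  rewrite -(mxrank_leqif_sup PK).2 rP rK Hr; apply/eqP; lia.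
move=> g; split => [/nullK H | /Pi_sub H].
  by apply/sub_Pi; exact: submx_trans H KP.
by apply/nullK; exact: submx_trans H PK.
Qed.
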